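(* Let $\eta\in(0,1)$, let $\pi$ be a probability vector on $[K]$ with positive entries, let $\ell\in[-1,1]^K$ be fixed, and let $A\sim\pi$. Define $\tilde\ell_i=\ell_i\mathbb{I}(A=i)$, $\lambda_i=\frac{\pi_i\pi_A\ell_A}{\sum_{j}\pi_j^2}$ and $\pi'_i=\pi_i\big(1-\eta(\tilde\ell_i-\lambda_i)\big)$. Then for every probability vector $u$ on $[K]$ with positive entries, $$\langle\pi-u,\ell\rangle+\mathbb{E}\!\left[\eta^{-1}D_{LB}(u,\pi')\right]-\eta^{-1}D_{LB}(u,\pi)\le\frac{2\eta}{1-\eta}.$$
   Context: $D_{LB}$ is the Bregman divergence of the log-barrier $F(x)=-\sum_{i=1}^K\log x_i$: for $x,y$ with positive entries, $D_{LB}(y,x)=\sum_{i=1}^K\left(\frac{y_i}{x_i}-1-\log\frac{y_i}{x_i}\right)$. The expectation is over $A\sim\pi$. (Under these hypotheses $\pi'$ has positive entries and sums to one.) *)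

(* Defs.v *)
From HB Require Import structures.
From mathcomp Require Import all_boot all_order all_algebra.
From mathcomp Require Import reals exp.
Set Implicit Arguments. Unset Strict Implicit. Unset Printing Implicit Defensive.
Import Order.TTheory GRing.Theory Num.Theory.
Local Open Scope ring_scope.

(* Bregman divergence of the log-barrier F(x) = - sum_i log x_i:
   D_LB(y,x) = sum_i (y_i/x_i - 1 - log(y_i/x_i)). *)
Definition DLB (R : realType) (K : nat) (y x : 'I_K -> R) : R :=
  \sum_(i < K) (y i / x i - 1 - ln (y i / x i)).

Definition lam (R : realType) (K : nat) (pi l : 'I_K -> R) (a i : 'I_K) : R :=
  pi i * pi a * l a / \sum_(j < K) pi j ^+ 2.

Definition ltilde (R : realType) (K : nat) (l : 'I_K -> R) (a i : 'I_K) : R :=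
  if a == i then l i else 0.

Definition pi' (R : realType) (K : nat) (eta : R) (pi l : 'I_K -> R) (a i : 'I_K) : R :=
  pi i * (1 - eta * (ltilde l a i - lam pi l a i)).

(* Main.v *)
Require Import Defs.
From HB Require Import structures.
From mathcomp Require Import all_boot all_order all_algebra.
From mathcomp Require Import reals exp.
From mathcomp Require Import ring lra.
Import Order.TTheory GRing.Theory Num.Theory.
Set Implicit Arguments. Unset Strict Implicit. Unset Printing Implicit Defensive.
Local Open Scope ring_scope.

Lemma pt (R: realType) (eta p uu g : R): 0<eta -> eta<1 -> 0<p -> 0<uu -> g <= 1 ->
 eta^-1 * ((uu/(p*(1-eta*g)) - 1 - ln (uu/(p*(1-eta*g)))) - (uu/p - 1 - ln(uu/p)))
 <= (uu/p - 1)*g + uu/p*(eta/(1-eta))*g^+2.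
Proof.
move=> e0 e1 p0 u0 g1.
have ye : 1 - eta <= 1 - eta*g by nra.
have y0 : 0 < 1 - eta*g by lra.
set y := 1 - eta*g in ye y0 *.
set q := uu/p.
have q0 : 0 < q by rewrite divr_gt0.
have -> : uu / (p*y) = q / y by rewrite /q invfM mulrA.
rewrite ln_div ?posrE ?divr_gt0 //.
have hl : ln y <= - (eta*g) by rewrite /y le_ln1Dx //; nra.
have key : 1/y - 1 - eta*g <= eta^+2 * g^+2/(1-eta).
  have -> : 1/y - 1 - eta*g = (eta*g)^+2 / y by rewrite /y; field; rewrite -/y gt_eqF.
  rewrite exprMn; apply: ler_wpM2l; first by rewrite mulr_ge0 // sqr_ge0.
  by rewrite lef_pV2 ?posrE //; lra.
rewrite -(ler_pM2l e0) [eta * (eta^-1 * _)]mulrA mulfV ?gt_eqF // mul1r.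
have hq : q * (1/y - 1 - eta*g) <= q * (eta^+2 * g^+2/(1-eta)) by rewrite ler_pM2l.
have -> : q / y = q * (1/y) by rewrite mul1r.
have E : eta * ((q - 1) * g + q * (eta / (1 - eta)) * g ^+ 2) =
   q*eta*g - eta*g + q * (eta^+2 * g^+2/(1-eta)) by field; rewrite gt_eqF // subr_gt0.
rewrite E. lra.
Qed.
Lemma S_ge (R : realType) K (pi: 'I_K -> R) (hpi: forall i, 0 < pi i) i a :
  pi i * pi a <= \sum_(j<K) pi j ^+2.
Proof.
have sge : forall P : pred 'I_K, 0 <= \sum_(j < K | P j) pi j ^+ 2.
  by move=> P; apply: sumr_ge0 => j _; exact: sqr_ge0.
case: (eqVneq a i) => [->|ne].
  by rewrite (bigD1 i) //= -expr2 lerDl.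
rewrite (bigD1 i) //= (bigD1 a) //=.
have := sge (fun j => (j != i) && (j != a)).
have := hpi i; have := hpi a. nra.
Qed.

Lemma S_gt (R : realType) K (pi: 'I_K -> R) (hpi: forall i, 0 < pi i) (i : 'I_K) :
  0 < \sum_(j<K) pi j ^+2.
Proof. have := S_ge hpi i i; have := mulr_gt0 (hpi i) (hpi i); lra. Qed.

Lemma lamE (R : realType) K (pi l: 'I_K -> R) a i :
  lam pi l a i = (pi i * pi a / \sum_(j<K) pi j ^+2) * l a.
Proof. by rewrite /lam mulrAC. Qed.

Lemma t_bnd (R : realType) K (pi: 'I_K -> R) (hpi: forall i, 0 < pi i) a i :
  0 <= pi i * pi a / \sum_(j<K) pi j ^+2 <= 1.
Proof.
have S0 := S_gt hpi i.
apply/andP; split; first by rewrite divr_ge0 // ltW // mulr_gt0.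
by rewrite ler_pdivrMr // mul1r S_ge.
Qed.

Lemma g_bnd (R : realType) K (pi l: 'I_K -> R) (hpi: forall i, 0 < pi i)
  (hl : forall i, -1 <= l i <= 1) a i :
  -1 <= ltilde l a i - lam pi l a i <= 1.
Proof.
rewrite lamE /ltilde; have /andP[t0 t1] := t_bnd hpi a i.
set t := _ / _ in t0 t1 *.
case: eqP => [E|ne]; have /andP[l0 l1] := hl a.
  rewrite -E. apply/andP; split; nra.
apply/andP; split; nra.
Qed.

Lemma g2_sum (R : realType) K (pi l: 'I_K -> R) (hpi: forall i, 0 < pi i)
  (hl : forall i, -1 <= l i <= 1) i :
  \sum_a pi a * (ltilde l a i - lam pi l a i)^+2 <= 2 * pi i.
Proof.
have S0 := S_gt hpi i.
set S := \sum_(j<K) pi j ^+2 in S0.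
have E : \sum_a pi i * pi a / S * pi a = pi i.
  transitivity (pi i * S / S); last by rewrite -mulrA mulfV ?gt_eqF // mulr1.
  rewrite /S big_distrr /= big_distrl /=; apply: eq_bigr => a _.
  rewrite expr2; ring.
rewrite (bigD1 i) //=.
have h1 : pi i * (ltilde l i i - lam pi l i i) ^+ 2 <= pi i.
  have /andP[g0 g1] := g_bnd hpi hl i i.
  set g := _ - _ in g0 g1 *.
  have g2 : g ^+ 2 <= 1 by rewrite expr2; nra.
  rewrite -{2}(mulr1 (pi i)) ler_pM2l //.
have h2 : \sum_(a < K | a != i) pi a * (ltilde l a i - lam pi l a i) ^+ 2
   <= \sum_(a < K | a != i) pi i * pi a / S * pi a.
  apply: ler_sum => a ne.
  rewrite lamE /ltilde (negbTE ne) -/S.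
  have /andP[t0 t1] := t_bnd hpi a i. rewrite -/S in t0 t1.
  set t := _ / _ in t0 t1 *.
  have /andP[l0 l1] := hl a.
  have l2 : l a ^+ 2 <= 1 by rewrite expr2; nra.
  have h : t ^+ 2 * l a ^+ 2 <= t.
    apply: (le_trans (y := t ^+ 2)); first by rewrite -{2}(mulr1 (t^+2)) ler_wpM2l // sqr_ge0.
    by rewrite expr2; nra.
  by rewrite sub0r sqrrN exprMn [t * pi a]mulrC ler_pM2l.
have h3 : \sum_(a < K | a != i) pi i * pi a / S * pi a <= pi i.
  rewrite -{2}E (bigD1 i (P := predT)) //= lerDr.
  by rewrite !mulr_ge0 ?invr_ge0 // ltW.
lra.
Qed.

Lemma g_mean (R : realType) K (pi l: 'I_K -> R) i :
  \sum_a pi a * (ltilde l a i - lam pi l a i) =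
  pi i * l i - pi i * ((\sum_a pi a ^+2 * l a) / \sum_(j<K) pi j ^+2).
Proof.
under eq_bigr do rewrite mulrBr.
rewrite sumrB; congr (_ - _).
  rewrite (bigD1 i) //= /ltilde eqxx big1 ?addr0 // => a ne.
  by rewrite (negbTE ne) mulr0.
rewrite /lam [RHS]mulrA [pi i * _]big_distrr /= big_distrl /=; apply: eq_bigr => a _.
rewrite expr2; ring.
Qed.

Theorem mainTheorem4 (R : realType) (K : nat) (eta : R) (pi l u : 'I_K -> R) :
  0 < eta -> eta < 1 ->
  (forall i, 0 < pi i) -> \sum_(i < K) pi i = 1 ->
  (forall i, -1 <= l i <= 1) ->
  (forall i, 0 < u i) -> \sum_(i < K) u i = 1 ->
  \sum_(i < K) (pi i - u i) * l i
    + \sum_(a < K) pi a * (eta^-1 * DLB u (pi' eta pi l a))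
    - eta^-1 * DLB u pi
  <= 2 * eta / (1 - eta).
Proof.
move=> e0 e1 hpi spi hl hu su.
set c := (\sum_a pi a ^+2 * l a) / \sum_(j<K) pi j ^+2.
set k := eta / (1 - eta).
have k0 : 0 <= k by rewrite divr_ge0 ?ltW // subr_gt0.
have hA : \sum_(a < K) pi a * (eta^-1 * DLB u (pi' eta pi l a)) - eta^-1 * DLB u pi
   = \sum_a pi a * (eta^-1 * (DLB u (pi' eta pi l a) - DLB u pi)).
  rewrite -(mul1r (eta^-1 * DLB u pi)) -spi big_distrl /= -sumrB.
  by apply: eq_bigr => a _; rewrite -mulrBr -mulrBr.
have hB : \sum_a pi a * (eta^-1 * (DLB u (pi' eta pi l a) - DLB u pi)) <=
   \sum_a pi a * \sum_i ((u i / pi i - 1) * (ltilde l a i - lam pi l a i)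
        + u i / pi i * k * (ltilde l a i - lam pi l a i) ^+ 2).
  apply: ler_sum => a _; rewrite ler_pM2l //.
  rewrite /DLB -sumrB big_distrr /=; apply: ler_sum => i _.
  have /andP[_ g1] := g_bnd hpi hl a i.
  exact: pt.
have hC : \sum_a pi a * \sum_i ((u i / pi i - 1) * (ltilde l a i - lam pi l a i)
        + u i / pi i * k * (ltilde l a i - lam pi l a i) ^+ 2)
   = \sum_i ((u i / pi i - 1) * \sum_a pi a * (ltilde l a i - lam pi l a i)
        + u i / pi i * k * \sum_a pi a * (ltilde l a i - lam pi l a i) ^+ 2).
  under eq_bigr do rewrite big_distrr /=.
  rewrite exchange_big /=; apply: eq_bigr => i _.
  rewrite !big_distrr -big_split /=; apply: eq_bigr => a _; ring.
have hD : \sum_i ((u i / pi i - 1) * \sum_a pi a * (ltilde l a i - lam pi l a i)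
        + u i / pi i * k * \sum_a pi a * (ltilde l a i - lam pi l a i) ^+ 2)
   <= \sum_i ((u i - pi i) * l i - (u i - pi i) * c + u i * (2 * k)).
  apply: ler_sum => i _; rewrite g_mean -/c.
  have p0 := hpi i.
  have -> : (u i - pi i) * l i - (u i - pi i) * c + u i * (2 * k) =
     (u i / pi i - 1) * (pi i * l i - pi i * c) + u i / pi i * k * (2 * pi i).
    by field; rewrite gt_eqF.
  rewrite lerD2l; apply: ler_wpM2l; last exact: g2_sum.
  by rewrite mulr_ge0 // divr_ge0 // ltW.
have hE : \sum_i ((u i - pi i) * l i - (u i - pi i) * c + u i * (2 * k))
    = - \sum_i (pi i - u i) * l i + 2 * k.
  rewrite !big_split /=.
  rewrite -[\sum_i u i * (2 * k)]big_distrl /= su mul1r.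
  rewrite sumrN -[\sum_i (u i - pi i) * c]big_distrl /= sumrB su spi subrr mul0r oppr0 addr0.
  by rewrite -sumrN; congr (_ + _); apply: eq_bigr => i _; ring.
have -> : 2 * eta / (1 - eta) = 2 * k by rewrite /k mulrA.
rewrite -addrA hA. lra.
Qed.
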